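(* Let $0<p\le2$. The function $r\mapsto\|r\|_p^p$ from $\mathbb{R}_\infty$ to $\mathbb{R}_+$ is a morphism on an arbitrary large subset of $\mathbb{R}_\infty$: for every $N,M\in\mathbb{N}$ and every $s_1,\dots,s_M\in\mathbb{R}_+$ there exist elements $g_{n,k}\in\mathbb{R}_\infty$ ($1\le n\le N$, $1\le k\le M$) such that $\|g_{n,j}^{-1}g_{m,k}\|_p^p=s_j+s_k$ for all $j,k$ and all $n\ne m$.
   Context: $\mathbb{R}_+=[0,\infty)$. $\mathbb{R}_\infty$ (the free real line with infinitely many generators) is the free product of countably many copies $\mathbb{R}^{(1)},\mathbb{R}^{(2)},\dots$ of the additive group $\mathbb{R}$. Every $r\ne e$ in $\mathbb{R}_\infty$ is uniquely a reduced word $r=x_1x_2\cdots x_n$ with $x_j\in\mathbb{R}^{(i_j)}\setminus\{0\}$ and $i_j\ne i_{j+1}$; its $\ell^p$ length is $\|r\|_p=(\sum_{j=1}^n|x_j|^p)^{1/p}$, and $\|e\|_p=0$. *)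

(* Defs.v *)
From Stdlib Require Import Reals List Arith.
Open Scope R_scope.
Import ListNotations.

(* The free real line R_infty = free product of copies R^(i), i : nat
   (copy index i stands for R^(i+1)).  Elements are reduced words:
   lists of letters (i, x) with x <> 0 in copy i and consecutive letters
   in different copies. *)
Definition letter := (nat * R)%type.
Definition word := list letter.

Fixpoint reduced (w : word) : Prop :=
  match w with
  | [] => True
  | (i, x) :: w' =>
      x <> 0 /\
      match w' with
      | [] => True
      | (j, _) :: _ => i <> j
      end /\ reduced w'
  end.

Definition push (a : letter) (w : word) : word :=
  let (i, x) := a in
  if Req_EM_T x 0 then w else
  match w with
  | [] => [(i, x)]
  | (j, y) :: w' =>
      if Nat.eq_dec i j then
        (if Req_EM_T (x + y) 0 then w' else (i, x + y) :: w')
      else (i, x) :: w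
  end.

Definition wmul (u v : word) : word := fold_right push v u.

Definition winv (u : word) : word :=
  rev (map (fun a : letter => (fst a, - snd a)) u).

(* ||r||_p^p = sum_j |x_j|^p  (letters are nonzero, so Rpower is the usual power;
   the empty word gives 0) *)
Definition lp_pow (p : R) (w : word) : R :=
  fold_right (fun a acc => Rpower (Rabs (snd a)) p + acc) 0 w.

(* Main.v *)
Require Import Defs.
From Stdlib Require Import Reals List Arith Lra.
Open Scope R_scope.
Import ListNotations.

Lemma rp_pos (a p : R) : 0 < a -> 0 < Rpower a p.
Proof. intros; unfold Rpower; apply exp_pos. Qed.

Lemma rp_back (a p : R) : 0 < p -> 0 < a -> Rpower (Rabs (Rpower a (/p))) p = a.
Proof.
  intros hp ha. rewrite Rabs_right by (left; apply rp_pos; auto).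
  rewrite Rpower_mult. rewrite Rinv_l by lra. apply Rpower_1; auto.
Qed.

Lemma rp_back' (a p : R) : 0 < p -> 0 < a -> Rpower (Rabs (- Rpower a (/p))) p = a.
Proof. intros. rewrite Rabs_Ropp. apply rp_back; auto. Qed.

Theorem proposition4p7 (p : R) (hp0 : 0 < p) (hp2 : p <= 2)
  (N M : nat) (s : nat -> R) (hs : forall k, (k < M)%nat -> 0 <= s k) :
  exists g : nat -> nat -> word,
    (forall n k, (n < N)%nat -> (k < M)%nat -> reduced (g n k)) /\
    (forall n m j k, (n < N)%nat -> (m < N)%nat -> (j < M)%nat -> (k < M)%nat ->
       n <> m -> lp_pow p (wmul (winv (g n j)) (g m k)) = s j + s k).
Proof.
  exists (fun n k => if Rlt_dec 0 (s k) then [(n, Rpower (s k) (/p))] else []).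
  split.
  - intros n k _ _. destruct (Rlt_dec 0 (s k)); simpl; auto.
    repeat split; auto. apply Rgt_not_eq, rp_pos; auto.
  - intros n m j k _ _ hj hk hnm.
    pose proof (hs j hj); pose proof (hs k hk).
    destruct (Rlt_dec 0 (s j)) as [Hj|Hj]; destruct (Rlt_dec 0 (s k)) as [Hk|Hk];
      unfold winv, wmul; simpl.
    + destruct (Req_EM_T (- Rpower (s j) (/p)) 0) as [e|_].
      { pose proof (rp_pos (s j) (/p) Hj); lra. }
      destruct (Nat.eq_dec n m); [contradiction|].
      simpl. rewrite rp_back' by auto. rewrite rp_back by auto. lra.
    + destruct (Req_EM_T (- Rpower (s j) (/p)) 0) as [e|_].
      { pose proof (rp_pos (s j) (/p) Hj); lra. }
      simpl. rewrite rp_back' by auto. lra.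
    + rewrite rp_back by auto. lra.
    + lra.
Qed.
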